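(* Let $\widetilde{\mathbb{F}}$ be a field of characteristic $p>2$, and $\mathbb{F}$ a field algebraic over $\mathbb{F}_p$. Let $f:\mathbb{F}\to\widetilde{\mathbb{F}}$ be an SD-map. Then $f$ is a field homomorphism of $\mathbb{F}$ onto its image, except when $\mathbb{F}=\mathbb{F}_5$, in which case $f$ can alternatively be only the map $w\mapsto w^3$ (with $\mathbb{F}_5$ identified with the prime subfield of $\widetilde{\mathbb{F}}$).
   Context: $\mathbb{F}_p$ denotes the field with $p$ elements. A map $f:\mathbb{F}\to\widetilde{\mathbb{F}}$ between fields is called an SD-map if for all $x\neq y$ in $\mathbb{F}$ one has $f(x)\neq f(y)$ and \[ f\left(\frac{x+y}{x-y}\right)=\frac{f(x)+f(y)}{f(x)-f(y)}. \] *)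

(* Defs.v *)
From mathcomp Require Import all_boot all_order all_algebra.
Set Implicit Arguments. Unset Strict Implicit. Unset Printing Implicit Defensive.
Import GRing.Theory.
Local Open Scope ring_scope.

Definition SD_map (F Ft : fieldType) (f : F -> Ft) : Prop :=
  forall x y : F, x != y ->
    f x != f y /\ f ((x + y) / (x - y)) = (f x + f y) / (f x - f y).

Definition algebraic_over_Fp (p : nat) (F : fieldType) : Prop :=
  p \in [pchar F] /\
  forall x : F, exists q : {poly 'F_p},
    q != 0 /\ root (map_poly (fun c : 'F_p => (nat_of_ord c)%:R : F) q) x.

Definition field_hom (F Ft : fieldType) (f : F -> Ft) : Prop :=
  (forall x y, f (x + y) = f x + f y) /\
  (forall x y, f (x * y) = f x * f y) /\
  f 1 = 1.

Definition is_F5 (F : fieldType) : Prop :=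
  5%N \in [pchar F] /\ forall x : F, exists n : nat, x = n%:R.

(* Main.v *)
Require Import Defs.
From mathcomp Require Import all_boot all_order all_algebra.
From mathcomp.algebra_tactics Require Import ring.
Import GRing.Theory.
Local Open Scope ring_scope.

Lemma sd_inj {F Ft : fieldType} {f : F -> Ft} :
  SD_map f -> forall x y, f x = f y -> x = y.
Proof.
move=> hSD x y e; apply/eqP; apply/negPn/negP => /hSD [/eqP h _]; exact: h.
Qed.

Lemma sd_01 {F Ft : fieldType} {f : F -> Ft} :
  (2%:R : F) != 0 -> (2%:R : Ft) != 0 -> SD_map f -> f 0 = 0 /\ f 1 = 1.
Proof.
move=> hF hFt hSD.
have n1 : (1 : F) != -1.
  apply/eqP => e; move/eqP: hF; apply; rewrite -[2%:R]/(1 + 1 : F).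
  by rewrite {1}e addNr.
have key : forall x : F, x != 0 -> f x * (f 1 - 1) = f 0 * (f 1 + 1).
  move=> x x0; have [h1 h2] := hSD x 0 x0.
  move: h2; rewrite addr0 subr0 divff //.
  have hd : f x - f 0 != 0 by rewrite subr_eq0.
  move=> ->; field; exact: hd.
have k1 := key 1 (oner_neq0 _).
have km : f (-1) * (f 1 - 1) = f 0 * (f 1 + 1) by apply: key; rewrite oppr_eq0 oner_neq0.
have [hne _] := hSD 1 (-1) n1.
have h1 : f 1 = 1.
  apply/eqP; rewrite -subr_eq0; apply/eqP.
  have : (f 1 - f (-1)) * (f 1 - 1) = 0 by rewrite mulrBl k1 km subrr.
  by move/eqP; rewrite mulf_eq0 subr_eq0 (negbTE hne) /= => /eqP.
split => //.
move: k1; rewrite h1 subrr mulr0 => /esym/eqP.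
rewrite mulf_eq0 => /orP [/eqP // | h]; exfalso.
by move/eqP: hFt; apply; apply/eqP.
Qed.

Lemma sd_m1 {F Ft : fieldType} {f : F -> Ft} :
  (2%:R : F) != 0 -> (2%:R : Ft) != 0 -> SD_map f -> f (-1) = -1.
Proof.
move=> hF hFt hSD; have [h0 h1] := sd_01 hF hFt hSD.
have n01 : (0 : F) != 1 by rewrite eq_sym oner_neq0.
have [_ e] := hSD 0 1 n01.
move: e; rewrite add0r sub0r h0 h1 add0r sub0r !mul1r !invrN !invr1 => <- //.
Qed.

Lemma sd_mul {F Ft : fieldType} {f : F -> Ft} :
  (2%:R : F) != 0 -> (2%:R : Ft) != 0 -> SD_map f -> forall x t, f (x * t) = f x * f t.
Proof.
move=> hF hFt hSD x t; have [h0 h1] := sd_01 hF hFt hSD.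
have [->|x0] := eqVneq x 0; first by rewrite mul0r h0 mul0r.
have [->|t1] := eqVneq t 1; first by rewrite mulr1 h1 mulr1.
have hxt : x != x * t.
  apply/eqP => e; move/eqP: t1; apply.
  by apply: (mulfI x0); rewrite mulr1 -e.
have h1t : (1 : F) != t by rewrite eq_sym.
have [hA eA] := hSD _ _ hxt.
have [hT eT] := hSD _ _ h1t.
have e1 : (x + x * t) / (x - x * t) = (1 + t) / (1 - t).
  have : 1 - t != 0 by rewrite subr_eq0.
  move=> ht; field; by rewrite ht subr_eq0 hxt.
rewrite e1 eT h1 in eA.
move: hA hT eA; rewrite h1.
move: (f x) (f (x * t)) (f t) => A B T hA hT eA.
have hAB : A - B != 0 by rewrite subr_eq0.
have hT1 : 1 - T != 0 by rewrite subr_eq0.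
have e2 : (A + B) * (1 - T) = (1 + T) * (A - B).
  have -> : (A + B) * (1 - T) = (A + B) / (A - B) * ((A - B) * (1 - T)).
    by field.
  by rewrite -eA; field.
have e3 : 2%:R * (B - A * T) = 0.
  have -> : 2%:R * (B - A * T) = (A + B) * (1 - T) - (1 + T) * (A - B) by ring.
  by rewrite e2 subrr.
by move/eqP: e3; rewrite mulf_eq0 (negbTE hFt) /= subr_eq0 => /eqP.
Qed.

Lemma sd_nz {F Ft : fieldType} {f : F -> Ft} :
  (2%:R : F) != 0 -> (2%:R : Ft) != 0 -> SD_map f -> forall z, z != 0 -> f z != 0.
Proof.
move=> hF hFt hSD z z0; have [h0 _] := sd_01 hF hFt hSD.
by apply/eqP; rewrite -h0 => /(sd_inj hSD) /eqP; rewrite (negbTE z0).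
Qed.

Lemma sd_inv {F Ft : fieldType} {f : F -> Ft} :
  (2%:R : F) != 0 -> (2%:R : Ft) != 0 -> SD_map f -> forall z, f (z^-1) = (f z)^-1.
Proof.
move=> hF hFt hSD z; have [h0 h1] := sd_01 hF hFt hSD.
have [->|z0] := eqVneq z 0; first by rewrite invr0 h0 invr0.
have fz := sd_nz hF hFt hSD _ z0.
have : f z * f z^-1 = 1 by rewrite -(sd_mul hF hFt hSD) divff.
by move=> e; apply: (mulfI fz); rewrite e divff.
Qed.

Lemma sd_opp {F Ft : fieldType} {f : F -> Ft} :
  (2%:R : F) != 0 -> (2%:R : Ft) != 0 -> SD_map f -> forall z, f (- z) = - f z.
Proof.
move=> hF hFt hSD z.
by rewrite -mulN1r (sd_mul hF hFt hSD) (sd_m1 hF hFt hSD) mulN1r.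
Qed.

Lemma sd_R {F Ft : fieldType} {f : F -> Ft} :
  (2%:R : F) != 0 -> (2%:R : Ft) != 0 -> SD_map f -> forall s a,
  f (s + a) * (f s - f a) = f (s - a) * (f s + f a).
Proof.
move=> hF hFt hSD s a; have [h0 h1] := sd_01 hF hFt hSD.
have [->|sa] := eqVneq s a; first by rewrite !subrr h0 mul0r mulr0.
have [hn e] := hSD s a sa.
have hsa : s - a != 0 by rewrite subr_eq0.
have fsa := sd_nz hF hFt hSD _ hsa.
have hd : f s - f a != 0 by rewrite subr_eq0.
rewrite (sd_mul hF hFt hSD) (sd_inv hF hFt hSD) in e.
have -> : f (s + a) = (f s + f a) / (f s - f a) * f (s - a).
  by rewrite -e; field.
by field.
Qed.

Lemma sd_nat {F Ft : fieldType} {f : F -> Ft} :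
  (2%:R : F) != 0 -> (2%:R : Ft) != 0 -> SD_map f -> f 2%:R = 2%:R ->
  forall n, f n%:R = n%:R.
Proof.
move=> hF hFt hSD h2; have [h0 h1] := sd_01 hF hFt hSD.
suff H : forall n, f n%:R = n%:R /\ f n.+1%:R = n.+1%:R by move=> n; case: (H n).
elim=> [|n [IH1 IH2]]; first by rewrite h0 h1.
split => //.
have [e|ne] := eqVneq (n.+1%:R : F) 1.
  have eF : (n.+2%:R : F) = 2%:R by rewrite -natr1 e; ring.
  have eFt : (n.+2%:R : Ft) = 2%:R by rewrite -natr1 -IH2 e h1; ring.
  by rewrite eF eFt h2.
have hR := sd_R hF hFt hSD (n.+1%:R) 1.
rewrite natr1 h1 IH2 (_ : n.+1%:R - 1 = n%:R) ?IH1 in hR; last by rewrite -natr1; ring.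
have ne' : (n.+1%:R : Ft) != 1.
  by apply/eqP; rewrite -IH2 -h1 => /(sd_inj hSD) /eqP; rewrite (negbTE ne).
have nn : (n%:R : Ft) != 0.
  by apply: contra ne' => /eqP e; rewrite -natr1 e add0r.
rewrite (_ : (n.+1%:R : F) - 1 = n%:R) ?IH1 in hR; last by rewrite -natr1; ring.
apply: (mulIf nn); rewrite hR mulrC; congr (_ * _); rewrite -natr1; ring.
Qed.

Lemma natnz {R : fieldType} {p k : nat} : p \in [pchar R] -> ~~ (p %| k)%N -> (k%:R : R) != 0.
Proof. by move=> ch; rewrite (dvdn_pcharf ch). Qed.

Lemma p_cases (p : nat) : prime p -> (2 < p)%N -> p = 3%N \/ p = 5%N \/ (7 <= p)%N.
Proof. by case: p => [|[|[|[|[|[|[|p]]]]]]] //= _ _; auto. Qed.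

Lemma sd_f2 (p : nat) {F Ft : fieldType} {f : F -> Ft} :
  prime p -> (2 < p)%N -> p \in [pchar F] -> p \in [pchar Ft] -> SD_map f ->
  f 2%:R = 2%:R \/ (p = 5%N /\ f 2%:R = - 2%:R).
Proof.
move=> pp p2 chF chFt hSD.
have ndvd k : (0 < k)%N -> (k < p)%N -> ~~ (p %| k)%N.
  by move=> k0 kp; apply/negP => /(dvdn_leq k0); rewrite leqNgt kp.
have hF : (2%:R : F) != 0 by apply: (natnz chF); apply: ndvd.
have hFt : (2%:R : Ft) != 0 by apply: (natnz chFt); apply: ndvd.
have [h0 h1] := sd_01 hF hFt hSD.
have hm1 := sd_m1 hF hFt hSD.
have hmul := sd_mul hF hFt hSD.
have hR := sd_R hF hFt hSD.
have [p3|p5'] := p_cases p pp p2.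
  left.
  have e3F : (3%:R : F) = 0 by apply/eqP; rewrite -(dvdn_pcharf chF) p3.
  have e3Ft : (3%:R : Ft) = 0 by apply/eqP; rewrite -(dvdn_pcharf chFt) p3.
  have -> : (2%:R : F) = -1 by apply/eqP; rewrite -subr_eq0 -e3F; apply/eqP; ring.
  by rewrite hm1; apply/eqP; rewrite eq_sym -subr_eq0 -e3Ft; apply/eqP; ring.
have p5 : (4 < p)%N by case: p5' => [->|]//; apply: leq_trans.
have n3 : (3%:R : F) != 0 by apply: (natnz chF); apply: ndvd => //; apply: leq_trans p5.
have n4 : (4%:R : F) != 0 by apply: (natnz chF); apply: ndvd.
move ec: (f 2%:R) => c.
have c0 : c != 0 by rewrite -ec; apply: (sd_nz hF hFt hSD).
have c1 : c - 1 != 0.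
  rewrite subr_eq0 -h1 -ec; apply/eqP => /(sd_inj hSD) /eqP; rewrite -subr_eq0.
  by rewrite (_ : (2%:R : F) - 1 = 1) ?oner_eq0 //; ring.
have f4 : f 4%:R = c ^+ 2 by rewrite (_ : (4%:R : F) = 2%:R * 2%:R) ?hmul ?ec; [ring | ring].
have c21 : c ^+ 2 - 1 != 0.
  rewrite -f4 subr_eq0 -h1; apply/eqP => /(sd_inj hSD) /eqP; rewrite -subr_eq0.
  rewrite (_ : (4%:R : F) - 1 = 3%:R); [by rewrite (negbTE n3) | ring].
have E1 : f 3%:R * (c - 1) = c + 1.
  have := hR 2%:R 1; rewrite h1 ec (_ : (2%:R : F) + 1 = 3%:R); last by ring.
  by rewrite (_ : (2%:R : F) - 1 = 1) ?h1 ?mul1r //; ring.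
have E3 : f 5%:R * (c ^+ 2 - 1) = f 3%:R * (c ^+ 2 + 1).
  have := hR 4%:R 1; rewrite h1 f4 (_ : (4%:R : F) + 1 = 5%:R); last by ring.
  by rewrite (_ : (4%:R : F) - 1 = 3%:R) //; ring.
have E4 : c * f 3%:R * (f 5%:R - 1) = c ^+ 2 * (f 5%:R + 1).
  have := hR 5%:R 1; rewrite h1 (_ : (5%:R : F) + 1 = 2%:R * 3%:R); last by ring.
  by rewrite hmul ec (_ : (5%:R : F) - 1 = 4%:R) ?f4 //; ring.
have e3 : f 3%:R = (c + 1) / (c - 1) by rewrite -E1; field.
have e5 : f 5%:R = f 3%:R * (c ^+ 2 + 1) / (c ^+ 2 - 1) by rewrite -E3; field.
have key : c * f 3%:R * (f 5%:R - 1) - c ^+ 2 * (f 5%:R + 1)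
   = - 2%:R * c ^+ 2 * ((c - 2%:R) * (c ^+ 2 + 1)) / (c - 1) ^+ 3.
  by rewrite e5 e3; field; rewrite c1 c21.
rewrite E4 subrr in key.
have hc3 : (c - 1) ^+ 3 != 0 by rewrite expf_neq0.
have m2 : - 2%:R * c ^+ 2 != 0 by rewrite mulf_neq0 ?oppr_eq0 ?expf_neq0.
have : (c - 2%:R) * (c ^+ 2 + 1) == 0.
  move/esym/eqP: key; rewrite mulf_eq0 invr_eq0 (negbTE hc3) orbF.
  by rewrite mulf_eq0 (negbTE m2).
rewrite mulf_eq0 => /orP [|hc].
  by rewrite subr_eq0 => /eqP ->; left.
have f5 : f 5%:R = 0.
  by rewrite e5 (eqP hc) mulr0 mul0r.
have e5F : (5%:R : F) = 0 by apply: (sd_inj hSD); rewrite f5 h0.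
have pd : (p %| 5)%N by rewrite (dvdn_pcharf chF) e5F.
have pe : p = 5%N.
  by apply/eqP; rewrite eqn_leq (dvdn_leq _ pd) //.
have [c2|c2] := eqVneq c 2%:R; first by left.
right; split => //.
have e5Ft : (5%:R : Ft) = 0 by apply/eqP; rewrite -(dvdn_pcharf chFt) pe.
have : (c - 2%:R) * (c + 2%:R) == 0.
  rewrite (_ : (c - 2%:R) * (c + 2%:R) = (c ^+ 2 + 1) - 5%:R); last by ring.
  by rewrite e5Ft subr0.
rewrite mulf_eq0 => /orP [|].
  by rewrite subr_eq0 (negbTE c2).
by rewrite addr_eq0 => /eqP.
Qed.

Lemma sd_dich {F Ft : fieldType} {f : F -> Ft} :
  (2%:R : F) != 0 -> (2%:R : Ft) != 0 -> SD_map f -> forall t, t != 0 -> t != -1 ->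
  f 2%:R * (f t - 1) * f (t + 1) ^+ 2 - 2%:R * f t ^+ 2 * f (t + 1)
    + f 2%:R * (f t + 1) = 0.
Proof.
move=> hF hFt hSD t t0 tm1.
have [h0 h1] := sd_01 hF hFt hSD.
have hm1 := sd_m1 hF hFt hSD.
have hR := sd_R hF hFt hSD.
have R1 := hR t 1.
have R2 := hR t 2%:R.
have R3 := hR (t + 1) 1.
have R4 := hR (t - 1) 1.
rewrite (_ : t + 1 + 1 = t + 2%:R) in R3; last by ring.
rewrite (_ : t + 1 - 1 = t) in R3; last by ring.
rewrite (_ : t - 1 + 1 = t) in R4; last by ring.
rewrite (_ : t - 1 - 1 = t - 2%:R) in R4; last by ring.
rewrite h1 in R1 R3 R4.
have u0 : f t != 0 by apply: (sd_nz hF hFt hSD).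
have u1 : f t + 1 != 0.
  rewrite addr_eq0 -hm1; apply/eqP => /(sd_inj hSD) /eqP; exact/negP.
have a1 : f (t + 1) - 1 != 0.
  rewrite subr_eq0 -h1; apply/eqP => /(sd_inj hSD) /eqP.
  by rewrite -subr_eq0 addrK; exact/negP.
have b1 : f (t - 1) + 1 != 0.
  rewrite addr_eq0 -hm1; apply/eqP => /(sd_inj hSD) /eqP.
  by rewrite -subr_eq0 opprK subrK; exact/negP.
move: R1 R2 R3 R4 u0 u1 a1 b1.
move: (f t) (f (t + 1)) (f (t - 1)) (f (t + 2%:R)) (f (t - 2%:R)) (f 2%:R).
move=> u a b C D c R1 R2 R3 R4 u0 u1 a1 b1.
have eb : b = a * (u - 1) / (u + 1) by rewrite R1; field.
have eC : C = u * (a + 1) / (a - 1) by rewrite -R3; field.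
have eD : D = u * (b - 1) / (b + 1) by rewrite R4; field.
have hab : a * (u - 1) + (u + 1) != 0.
  have -> : a * (u - 1) + (u + 1) = (b + 1) * (u + 1) by rewrite eb; field.
  by rewrite mulf_neq0.
have key : C * (u - c) - D * (u + c) = - 2%:R * u *
    (c * (u - 1) * a ^+ 2 - 2%:R * u ^+ 2 * a + c * (u + 1))
    / ((a - 1) * (a * (u - 1) + (u + 1))).
  by rewrite eD eb eC; field; rewrite hab a1 u1.
rewrite R2 subrr in key.
move/esym/eqP: key; rewrite mulf_eq0 invr_eq0 mulf_eq0.
rewrite [(a - 1) * _ == 0]mulf_eq0 (negbTE a1) (negbTE hab) orbF.
by rewrite orbF mulf_eq0 oppr_eq0 (negbTE hFt) (negbTE u0) /= => /eqP.
Qed.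

Definition Pf {F : fieldType} (t : F) := exists n : nat, t = n%:R \/ t = - n%:R.

Lemma Pf_add1 {F : fieldType} (t : F) : Pf (t + 1) -> Pf t.
Proof.
case=> [[|n] [e|e]].
- by exists 1%N; right; rewrite -[t](addrK 1) e; ring.
- by exists 1%N; right; rewrite -[t](addrK 1) e; ring.
- by exists n; left; rewrite -[t](addrK 1) e -natr1; ring.
- by exists n.+2; right; rewrite -natr1 -natr1 -[t](addrK 1) e; ring.
Qed.

Lemma Pf_sub1 {F : fieldType} (t : F) : Pf (t - 1) -> Pf t.
Proof.
case=> [[|n] [e|e]].
- by exists 1%N; left; rewrite -[t](subrK 1) e; ring.
- by exists 1%N; left; rewrite -[t](subrK 1) e; ring.
- by exists n.+2; left; rewrite -natr1 -natr1 -[t](subrK 1) e; ring.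
- by exists n; right; rewrite -[t](subrK 1) e -natr1; ring.
Qed.

Lemma Pf_nat {F : fieldType} (n : nat) : Pf (n%:R : F).
Proof. by exists n; left. Qed.

Lemma Pf_opp {F : fieldType} (t : F) : Pf t -> Pf (- t).
Proof. by case=> n [->|->]; exists n; [right | left; rewrite opprK]. Qed.

From Stdlib Require Import Classical_Prop.

Lemma lin {R : comRingType} (k : R) {X Y Z : R} : Z = 0 -> X - Y = k * Z -> X = Y.
Proof. by move=> -> /eqP; rewrite mulr0 subr_eq0 => /eqP. Qed.

Lemma lin2 {R : comRingType} (k1 k2 : R) {X Y Z1 Z2 : R} : Z1 = 0 -> Z2 = 0 ->
  X - Y = k1 * Z1 + k2 * Z2 -> X = Y.
Proof. by move=> -> -> /eqP; rewrite !mulr0 addr0 subr_eq0 => /eqP. Qed.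

Lemma lin3 {R : comRingType} (k1 k2 k3 : R) {X Y Z1 Z2 Z3 : R} : Z1 = 0 -> Z2 = 0 -> Z3 = 0 ->
  X - Y = k1 * Z1 + k2 * Z2 + k3 * Z3 -> X = Y.
Proof. by move=> -> -> -> /eqP; rewrite !mulr0 !addr0 subr_eq0 => /eqP. Qed.

Lemma notPf {F : fieldType} (t : F) : ~ Pf t ->
  [/\ t != 0, t != 1, t != -1, ~ Pf (t - 1) & ~ Pf (t + 1)].
Proof.
move=> nP; split.
- by apply/eqP => e; apply: nP; rewrite e; exists 0%N; left.
- by apply/eqP => e; apply: nP; rewrite e; exists 1%N; left.
- by apply/eqP => e; apply: nP; rewrite e; exists 1%N; right.
- by move/Pf_sub1.
- by move/Pf_add1.
Qed.

Lemma sd_step {F Ft : fieldType} {f : F -> Ft} :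
  (2%:R : F) != 0 -> (2%:R : Ft) != 0 -> SD_map f -> f 2%:R = 2%:R ->
  forall t, f (t + 1) = f t + 1.
Proof.
move=> hF hFt hSD h2 t.
have [h0 h1] := sd_01 hF hFt hSD.
have hnat := sd_nat hF hFt hSD h2.
have hopp := sd_opp hF hFt hSD.
have hmul := sd_mul hF hFt hSD.
case: (classic (Pf t)) => [[n [->|->]]|nP].
- by rewrite natr1 !hnat natr1.
- case: n => [|n]; first by rewrite oppr0 add0r h1 h0 add0r.
  rewrite (_ : - n.+1%:R + 1 = - (n%:R : F)); last by rewrite -natr1; ring.
  by rewrite !hopp !hnat -natr1; ring.
have [t0 t1 tm1 nP1 _] := notPf _ nP.
have [s0 _ sm1 _ _] := notPf _ nP1.
have D1 := sd_dich hF hFt hSD _ t0 tm1.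
have D2 := sd_dich hF hFt hSD _ s0 sm1.
have R1 := sd_R hF hFt hSD t 1.
rewrite h1 in R1.
rewrite h2 subrK in D2; rewrite h2 in D1.
have cube : f t ^+ 3 = 1 -> f (t + 1) = - f t ^+ 2.
  move=> u3.
  have t3 : t * t * t = 1 by apply: (sd_inj hSD); rewrite !hmul h1 -u3; ring.
  have tt : t * t + t + 1 = 0.
    have : (t - 1) * (t * t + t + 1) = 0 by rewrite (_ : (t - 1) * (t * t + t + 1) = t * t * t - 1); [rewrite t3 subrr | ring].
    by move/eqP; rewrite mulf_eq0 subr_eq0 (negbTE t1) /= => /eqP.
  rewrite (_ : t + 1 = - (t * t)); last by apply: (lin 1 tt); ring.
  by rewrite hopp hmul; ring.
move: D1 D2 R1 cube; move: (f t) (f (t + 1)) (f (t - 1)) => u a b D1 D2 R1 cube.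
have R1' : a * (u - 1) - b * (u + 1) = 0 by rewrite R1 subrr.
have : 2%:R * ((a - (u + 1)) * ((u - 1) * a - 1)) = 0 by rewrite -D1; ring.
move/eqP; rewrite mulf_eq0 (negbTE hFt) /= mulf_eq0 => /orP [|/eqP E1].
  by rewrite subr_eq0 => /eqP.
have : 2%:R * ((u - (b + 1)) * ((b - 1) * u - 1)) = 0 by rewrite -D2; ring.
move/eqP; rewrite mulf_eq0 (negbTE hFt) /= mulf_eq0 => /orP [/eqP E2|/eqP E2].
  have Eb : b * (u + 1) = 1 by apply: (lin2 (-1) 1 R1' E1); ring.
  have b0 : b != 0 by apply/eqP => e; move: Eb; rewrite e mul0r => /eqP; rewrite eq_sym oner_eq0.
  by apply: (mulfI b0); apply: (lin2 1 (-a) R1' E2); ring.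
have ub : b + u = 0 by apply: (lin3 1 (-1) (-1) E1 R1' E2); ring.
have uu : u ^+ 2 + u + 1 = 0 by apply: (lin2 (-1) u E2 ub); ring.
rewrite cube; first by apply: (lin (-1) uu); ring.
by apply: (lin (u - 1) uu); ring.
Qed.

Lemma sd_opt2 {F Ft : fieldType} {f : F -> Ft} :
  (2%:R : F) != 0 -> (2%:R : Ft) != 0 -> SD_map f -> f 2%:R = - 2%:R ->
  forall s, ~ Pf s -> (f s - 1) * f (s + 1) + 1 = 0.
Proof.
move=> hF hFt hSD h2 s nP.
have [h0 h1] := sd_01 hF hFt hSD.
have hm1 := sd_m1 hF hFt hSD.
have [s0 s1 sm1 nP1 _] := notPf _ nP.
have [r0 _ rm1 _ _] := notPf _ nP1.
have D1 := sd_dich hF hFt hSD _ s0 sm1.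
have D2 := sd_dich hF hFt hSD _ r0 rm1.
have R1 := sd_R hF hFt hSD s 1.
rewrite h1 in R1.
rewrite h2 subrK in D2; rewrite h2 in D1.
have u1 : f s - 1 != 0.
  by rewrite subr_eq0 -h1; apply/eqP => /(sd_inj hSD) /eqP; apply/negP.
have um1 : f s + 1 != 0.
  by rewrite addr_eq0 -hm1; apply/eqP => /(sd_inj hSD) /eqP; apply/negP.
move: D1 D2 R1 u1 um1; move: (f s) (f (s + 1)) (f (s - 1)) => u a b D1 D2 R1 u1 um1.
have R1' : a * (u - 1) - b * (u + 1) = 0 by rewrite R1 subrr.
have : - 2%:R * ((a + (u + 1)) * ((u - 1) * a + 1)) = 0 by rewrite -D1; ring.
move/eqP; rewrite mulf_eq0 oppr_eq0 (negbTE hFt) /= mulf_eq0 => /orP [/eqP Ea|/eqP //].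
  exfalso.
have bu : b + u - 1 = 0.
  have : (b + u - 1) * (u + 1) = 0 by apply: (lin2 (-1) (u - 1) R1' Ea); ring.
  by move/eqP; rewrite mulf_eq0 (negbTE um1) orbF => /eqP.
have : - 2%:R * ((u + (b + 1)) * ((b - 1) * u + 1)) = 0 by rewrite -D2; ring.
move/eqP; rewrite mulf_eq0 oppr_eq0 (negbTE hFt) /= mulf_eq0 => /orP [/eqP E2|/eqP E2].
  by move/eqP: hFt; apply; apply: (lin2 1 (-1) E2 bu); ring.
have : (u - 1) * (u + 1) = 0 by apply: (lin2 (-1) u E2 bu); ring.
by move/eqP; rewrite mulf_eq0 (negbTE u1) (negbTE um1).
Qed.

Lemma sd_allPf {F Ft : fieldType} {f : F -> Ft} :
  (2%:R : F) != 0 -> (2%:R : Ft) != 0 -> (3%:R : F) != 0 -> SD_map f -> f 2%:R = - 2%:R ->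
  forall t : F, Pf t.
Proof.
move=> hF hFt h3 hSD h2 t.
apply: NNPP => nP.
have [t0 _ _ _ nP1] := notPf _ nP.
have [t10 _ _ _ nP2] := notPf _ nP1.
have [t20 _ _ _ _] := notPf _ nP2.
have E0 := sd_opt2 hF hFt hSD h2 _ nP.
have E1 := sd_opt2 hF hFt hSD h2 _ nP1.
have E2 := sd_opt2 hF hFt hSD h2 _ nP2.
have u0 : f t != 0 by apply: (sd_nz hF hFt hSD).
have e3 : f (t + 1 + 1 + 1) = f t.
  move: E0 E1 E2 u0; move: (f t) (f (t + 1)) (f (t + 1 + 1)) (f (t + 1 + 1 + 1)).
  move=> v0 v1 v2 v3 E0 E1 E2 v00.
  have n0 : v0 - 1 != 0.
    by apply/eqP => e; move: E0; rewrite e mul0r add0r => /eqP; rewrite oner_eq0.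
  have n1 : v1 - 1 != 0.
    by apply/eqP => e; move: E1; rewrite e mul0r add0r => /eqP; rewrite oner_eq0.
  have n2 : v2 - 1 != 0.
    by apply/eqP => e; move: E2; rewrite e mul0r add0r => /eqP; rewrite oner_eq0.
  have e1 : v1 = - (v0 - 1)^-1 by apply: (mulfI n0); rewrite mulrN divff // ; apply: (lin 1 E0); ring.
  have e2 : v2 = - (v1 - 1)^-1 by apply: (mulfI n1); rewrite mulrN divff // ; apply: (lin 1 E1); ring.
  have e3 : v3 = - (v2 - 1)^-1 by apply: (mulfI n2); rewrite mulrN divff // ; apply: (lin 1 E2); ring.
  move: n1 n2; rewrite e3 e2 e1 => n1 n2.
  field.
  have -> : -1 + -1 * (v0 - 1) = - v0 by ring.
  have -> : - (v0 - 1) + -1 * (- v0) = 1 by ring.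
  by rewrite n0 oppr_eq0 v00 oner_eq0.
move/(sd_inj hSD)/eqP: e3; rewrite -subr_eq0.
by rewrite (_ : t + 1 + 1 + 1 - t = 3%:R) ?(negbTE h3) //; ring.
Qed.

Lemma sd_add {F Ft : fieldType} {f : F -> Ft} :
  (2%:R : F) != 0 -> (2%:R : Ft) != 0 -> SD_map f -> f 2%:R = 2%:R ->
  forall x y, f (x + y) = f x + f y.
Proof.
move=> hF hFt hSD h2 x y.
have [h0 h1] := sd_01 hF hFt hSD.
have hmul := sd_mul hF hFt hSD.
have [->|y0] := eqVneq y 0; first by rewrite h0 !addr0.
have fy := sd_nz hF hFt hSD _ y0.
rewrite (_ : x + y = y * (x / y + 1)); last by field.
rewrite hmul (sd_step hF hFt hSD h2) hmul (sd_inv hF hFt hSD).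
by field.
Qed.

Lemma natr_mod5 {R : fieldType} (n : nat) : 5%N \in [pchar R] ->
  (n%:R : R) = (n %% 5)%:R.
Proof.
move=> ch; have e5 : (5%:R : R) = 0 by apply/eqP; rewrite -(dvdn_pcharf ch).
by rewrite {1}(divn_eq n 5) natrD natrM e5 mulr0 add0r.
Qed.

Theorem theorem3p3 (p : nat) (F Ft : fieldType) (f : F -> Ft) :
  prime p -> (2 < p)%N -> p \in [pchar Ft] -> algebraic_over_Fp p F ->
  SD_map f ->
  field_hom f \/
  (is_F5 F /\ forall n : nat, f n%:R = (n%:R : Ft) ^+ 3).
Proof.
move=> pp p2 chFt [chF _] hSD.
have ndvd k : (0 < k)%N -> (k < p)%N -> ~~ (p %| k)%N.
  by move=> k0 kp; apply/negP => /(dvdn_leq k0); rewrite leqNgt kp.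
have hF : (2%:R : F) != 0 by apply: (natnz chF); apply: ndvd.
have hFt : (2%:R : Ft) != 0 by apply: (natnz chFt); apply: ndvd.
have [h0 h1] := sd_01 hF hFt hSD.
have [h2|[p5 h2]] := sd_f2 p pp p2 chF chFt hSD.
  left; split; first exact: sd_add hF hFt hSD h2.
  by split => //; apply: sd_mul.
right.
subst p.
have h3 : (3%:R : F) != 0 by apply: (natnz chF).
have allP := sd_allPf hF hFt h3 hSD h2.
have e5F : (5%:R : F) = 0 by apply/eqP; rewrite -(dvdn_pcharf chF).
have e5Ft : (5%:R : Ft) = 0 by apply/eqP; rewrite -(dvdn_pcharf chFt).
split.
  split => // x; have [n [->|->]] := allP x; first by exists n.
  exists (4 * n)%N; rewrite natrM; apply: (lin (- n%:R) e5F); ring.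
move=> n; rewrite (natr_mod5 n chF) (natr_mod5 n chFt).
have hopp := sd_opp hF hFt hSD.
have hm1 := sd_m1 hF hFt hSD.
have : (n %% 5 < 5)%N by rewrite ltn_mod.
case: (n %% 5)%N => [|[|[|[|[|k]]]]] // _.
- by rewrite h0; ring.
- by rewrite h1; ring.
- by rewrite h2; apply: (lin (-2%:R) e5Ft); ring.
- rewrite (_ : (3%:R : F) = - 2%:R); last by apply: (lin 1 e5F); ring.
  by rewrite hopp h2; apply: (lin (-5%:R) e5Ft); ring.
- rewrite (_ : (4%:R : F) = - 1); last by apply: (lin 1 e5F); ring.
  by rewrite hm1; apply: (lin (-13%:R) e5Ft); ring.
Qed.
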